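(* Let $\rho\in[0,1]$ and define $\gamma_k(1)$, $\Gamma_k(1,\rho)$ as in the context. (a) If $\alpha_k=2/(k+1)$, $k=1,2,\ldots$, then $\alpha_k\in(0,1]$, $\alpha_1=1$, and $\gamma_k(1)\|\Gamma_k(1,\rho)\|_{\frac{2}{1-\rho}}\le ck^{-\frac{1+3\rho}{2}}$ for all $k\ge1$ with $c=2^{1+\rho}3^{-\frac{1-\rho}{2}}$. (b) If $\alpha_k$ are defined recursively by $\alpha_1=\gamma_1=1$, $\gamma_k=\alpha_k^2=(1-\alpha_k)\gamma_{k-1}$ for $k\ge2$ (with $\alpha_k>0$), then $\alpha_k\in(0,1]$ for all $k\ge1$, and the condition of (a) ($\alpha_1=1$ and $\gamma_k(1)\|\Gamma_k(1,\rho)\|_{\frac{2}{1-\rho}}\le ck^{-\frac{1+3\rho}{2}}$ for all $k$) holds with $c=\frac{4}{3^{(1-\rho)/2}}$.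
   Context: For $\alpha_k\in(0,1]$: $\gamma_1(1)=1$, $\gamma_k(1)=(1-\alpha_k)\gamma_{k-1}(1)$ for $k\ge2$; $\Gamma_k(1,\rho)=(\gamma_1(1)^{-1}\alpha_1^{1+\rho},\ldots,\gamma_k(1)^{-1}\alpha_k^{1+\rho})\in\mathbb{R}^k$; $\|\cdot\|_p$ is the $\ell_p$ norm, with $\frac{2}{1-\rho}=\infty$ when $\rho=1$. *)

(* Defs.v *)
From HB Require Import structures.
From mathcomp Require Import all_boot all_order all_algebra.
From mathcomp Require Import all_classical all_reals all_analysis.
Set Implicit Arguments. Unset Strict Implicit. Unset Printing Implicit Defensive.
Import Order.TTheory GRing.Theory Num.Theory.
Local Open Scope ring_scope.

Section Defs.
Variable R : realType.

(* gamma_k(1): gamma_1 = 1, gamma_k = (1 - alpha_k) gamma_{k-1} for k >= 2.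
   Indices start at 1; the value at index 0 is an unused filler (= 1). *)
Fixpoint gam (alpha : nat -> R) (k : nat) : R :=
  match k with
  | 0 => 1
  | 1 => 1
  | k'.+1 => (1 - alpha k) * gam alpha k'
  end.

Definition Gam_entry (alpha : nat -> R) (rho : R) (i : nat) : R :=
  (gam alpha i)^-1 * (alpha i `^ (1 + rho)).

Definition lp_norm (p : \bar R) (k : nat) (x : nat -> R) : R :=
  match p with
  | EFin r => (\sum_(1 <= i < k.+1) `|x i| `^ r) `^ r^-1
  | +oo%E => \big[Num.max/0]_(1 <= i < k.+1) `|x i|
  | -oo%E => 0
  end.

Definition lp_exponent (rho : R) : \bar R :=
  if rho == 1 then +oo%E else (2 / (1 - rho))%:E.

Definition Gam_norm (alpha : nat -> R) (rho : R) (k : nat) : R :=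
  lp_norm (lp_exponent rho) k (Gam_entry alpha rho).

End Defs.

(* Main.v *)
Require Import Defs.
From HB Require Import structures.
From mathcomp Require Import all_boot all_order all_algebra.
From mathcomp Require Import all_classical all_reals all_analysis.
Import Order.TTheory GRing.Theory Num.Theory.
Local Open Scope ring_scope.

From mathcomp Require Import ring lra.

Section S.
Variable R : realType.

Lemma sumsq (k : nat) :
  \sum_(1 <= i < k.+1) (i%:R : R) ^+ 2 = k%:R * (k%:R + 1) * (2 * k%:R + 1) / 6.
Proof.
elim: k => [|k IH]; first by rewrite big_geq //; field.
rewrite big_nat_recr //= IH -[k.+1]addn1 natrD; field; done.
Qed.

Lemma normb (rho C : R) (k : nat) (x : nat -> R) :
  0 <= rho -> rho <= 1 -> 0 <= C ->
  (forall i, (1 <= i <= k)%N -> 0 <= x i <= C * i%:R `^ (1 - rho)) ->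
  lp_norm (lp_exponent rho) k x <=
  C * (k%:R * (k%:R + 1) * (2 * k%:R + 1) / 6) `^ ((1 - rho) / 2).
Proof.
move=> r0 r1 C0 hx; rewrite /lp_exponent.
have [rho1|rn1] := eqVneq rho 1.
  subst rho; rewrite /= subrr mul0r powRr0 mulr1 big_seq.
  apply: (big_ind (fun y => y <= C)) => //.
    by move=> y z hy hz; rewrite ge_max hy hz.
  move=> i; rewrite mem_index_iota => /hx /andP[h1 h2].
  by rewrite ger0_norm // (le_trans h2) // subrr powRr0 mulr1.
have r1' : rho < 1 by rewrite lt_neqAle rn1.
set r := 2 / (1 - rho).
have rpos : 0 < r by rewrite /r divr_gt0 // subr_gt0.
have rinv : r^-1 = (1 - rho) / 2.
  by rewrite /r invf_div.
rewrite /= rinv.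
apply: (@le_trans _ _ ((C `^ r * (k%:R * (k%:R + 1) * (2 * k%:R + 1) / 6)) `^ ((1 - rho) / 2))).
  apply: ge0_ler_powR; first by rewrite divr_ge0 // subr_ge0.
  - by rewrite nnegrE sumr_ge0 // => i _; exact: powR_ge0.
  - by rewrite nnegrE mulr_ge0 ?powR_ge0 // divr_ge0 // mulr_ge0 // mulr_ge0 //; lra.
  rewrite -sumsq mulr_sumr; apply: ler_sum_nat => i /andP[i1 ik].
  have /andP[h1 h2] := hx i ltac:(by rewrite i1 -ltnS ik).
  rewrite ger0_norm //.
  apply: (le_trans (ge0_ler_powR (ltW rpos) _ _ h2)); rewrite ?nnegrE //.
    by rewrite mulr_ge0 // powR_ge0.
  rewrite powRM ?powR_ge0 // -powRrM.
  have -> : (1 - rho) * r = 2%:R by rewrite /r; field; rewrite subr_eq0 eq_sym.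
  by rewrite powR_mulrn.
have rs : r * ((1 - rho) / 2) = 1 by rewrite /r; field; rewrite subr_eq0 eq_sym.
by rewrite powRM ?powR_ge0 // -powRrM rs powRr1 //.
Qed.

Lemma keyK (s : R) (k : nat) : (1 <= k)%N -> 0 <= s -> s <= 1/2 ->
  (k%:R * (k%:R + 1) * (2 * k%:R + 1) / 6) `^ s * 3 `^ s <=
  k%:R `^ (3 * s - 1) * (k%:R + 1).
Proof.
move=> k1 s0 s12; set K : R := k%:R.
have K1 : 1 <= K by rewrite /K ler1n.
set Y := (K + 1) * (2 * K + 1) / (2 * K ^+ 2).
set Z := (K + 1) / K.
have Z1 : 1 <= Z by rewrite /Z ler_pdivlMr; lra.
have Y0 : 0 <= Y by rewrite /Y divr_ge0 //; nra.
have X0 : 0 <= K * (K + 1) * (2 * K + 1) / 6 by rewrite divr_ge0 //; nra.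
rewrite -powRM //.
have -> : K * (K + 1) * (2 * K + 1) / 6 * 3 = K `^ 3%:R * Y.
  rewrite powR_mulrn; last lra.
  rewrite /Y; field; lra.
rewrite powRM ?powR_ge0 // -powRrM.
have YZ : Y `^ s <= Z.
  apply: (@le_trans _ _ ((Z ^+ 2) `^ s)).
    apply: ge0_ler_powR; rewrite ?nnegrE //; first by rewrite exprn_ge0 //; lra.
    rewrite /Y /Z ler_pdivrMr; last nra.
    have -> : ((K + 1) / K) ^+ 2 * (2 * K ^+ 2) = 2 * (K + 1) ^+ 2.
      by field; lra.
    nra.
  rewrite -powR_mulrn; last lra.
  rewrite -powRrM; apply: (le_trans (ler_powR Z1 (_ : _ <= 1))); first lra.
  rewrite powRr1 //; lra.
have K3 : K `^ (3 * s - 1) = K `^ (3 * s) / K.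
  by rewrite powRB ?powRr1 //; apply/implyP=> _; rewrite gt_eqF //; lra.
rewrite K3.
apply: (@le_trans _ _ (K `^ (3 * s) * Z)).
  by rewrite mulrC (mulrC (K `^ _)) ler_wpM2r // powR_ge0.
rewrite /Z le_eqVlt; apply/orP; left; apply/eqP; field; lra.
Qed.

Lemma gamA (alpha : nat -> R) :
  (forall k : nat, (1 <= k)%N -> alpha k = 2 / (k%:R + 1)) ->
  forall k, (1 <= k)%N -> gam alpha k = 2 / (k%:R * (k%:R + 1)).
Proof.
move=> ha; elim=> [//|[|k] IH _].
  by rewrite /=; field.
have -> : gam alpha k.+2 = (1 - alpha k.+2) * gam alpha k.+1 by [].
rewrite IH // ha // !mulrS; field.
have k0 : 0 <= k%:R :> R by rewrite ler0n.
by rewrite !gt_eqF //; lra.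
Qed.

Lemma entryA (alpha : nat -> R) (rho : R) :
  0 <= rho -> rho <= 1 ->
  (forall k : nat, (1 <= k)%N -> alpha k = 2 / (k%:R + 1)) ->
  forall i, (1 <= i)%N ->
  0 <= Gam_entry alpha rho i <= 2 `^ rho * i%:R `^ (1 - rho).
Proof.
move=> r0 r1 ha i i1.
have I1 : 1 <= i%:R :> R by rewrite ler1n.
set I : R := i%:R in I1 *.
rewrite /Gam_entry gamA // ha //.
set a := 2 / (I + 1).
have a0 : 0 < a by rewrite /a divr_gt0 //; lra.
rewrite powRD; last by apply/implyP=> _; rewrite gt_eqF.
rewrite powRr1; last exact: ltW.
have -> : (2 / (I * (I + 1)))^-1 * (a * a `^ rho) = I * a `^ rho.
  rewrite /a; field; lra.
have eI : I = I `^ (1 - rho) * I `^ rho.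
  rewrite -powRD; last by apply/implyP=> _; rewrite gt_eqF //; lra.
  by rewrite subrK powRr1 //; lra.
apply/andP; split; first by rewrite mulr_ge0 ?powR_ge0 //; lra.
rewrite {1}eI.
rewrite -mulrA -powRM; [|lra|exact: ltW].
rewrite mulrC ler_wpM2r ?powR_ge0 //.
apply: ge0_ler_powR => //; rewrite ?nnegrE; [|lra|].
  by rewrite mulr_ge0 //; lra.
rewrite /a mulrA ler_pdivrMr; lra.
Qed.

Lemma finalA (k : nat) (A B P Q : R) : (1 <= k)%N -> 0 < A -> 0 < B ->
  Q * B <= P * (k%:R + 1) ->
  2 / (k%:R * (k%:R + 1)) * (A * Q) <= 2 * A * B^-1 * (P / k%:R).
Proof.
move=> k1 A0 B0 h.
have K1 : 1 <= k%:R :> R by rewrite ler1n.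
set K : R := k%:R in K1 h *.
have c0 : 0 <= 2 * A / (K * (K + 1) * B).
  by rewrite divr_ge0 ?mulr_ge0 //; nra.
have -> : 2 / (K * (K + 1)) * (A * Q) = 2 * A / (K * (K + 1) * B) * (Q * B).
  by field; rewrite !gt_eqF //; lra.
have -> : 2 * A * B^-1 * (P / K) = 2 * A / (K * (K + 1) * B) * (P * (K + 1)).
  by field; rewrite !gt_eqF //; lra.
exact: ler_wpM2l.
Qed.

Lemma partA (alpha : nat -> R) (rho : R) :
  0 <= rho -> rho <= 1 ->
  (forall k : nat, (1 <= k)%N -> alpha k = 2 / (k%:R + 1)) ->
  forall k : nat, (1 <= k)%N ->
        gam alpha k * Gam_norm alpha rho k <=
        (2 `^ (1 + rho) * 3 `^ (- ((1 - rho) / 2))) * k%:R `^ (- ((1 + 3 * rho) / 2)).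
Proof.
move=> r0 r1 ha k k1.
have hn := @normb rho (2 `^ rho) k (Gam_entry alpha rho) r0 r1 (powR_ge0 _ _)
  (fun i hi => @entryA alpha rho r0 r1 ha i (proj1 (andP hi))).
have K1 : 1 <= k%:R :> R by rewrite ler1n.
rewrite /Gam_norm gamA //.
apply: (le_trans (ler_wpM2l _ hn)).
  by rewrite divr_ge0 //; nra.
set s := (1 - rho) / 2.
have s0 : 0 <= s by rewrite /s; lra.
have s12 : s <= 1/2 by rewrite /s; lra.
have key := @keyK s k k1 s0 s12.
rewrite powRD; last by apply/implyP=> _; rewrite gt_eqF //; lra.
rewrite powRr1 //.
have -> : - ((1 + 3 * rho) / 2) = (3 * s - 1) - 1 by rewrite /s; field.
rewrite (powRN 3).
rewrite powRB; last by apply/implyP=> _; rewrite gt_eqF //; lra.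
rewrite powRr1; last lra.
apply: finalA => //; apply: powR_gt0; lra.
Qed.

Section B.
Variable alpha : nat -> R.
Hypothesis a1 : alpha 1%N = 1.
Hypothesis hr : forall k : nat, (2 <= k)%N ->
        0 < alpha k /\ alpha k ^+ 2 = (1 - alpha k) * gam alpha k.-1.

Lemma gamB k : (1 <= k)%N -> gam alpha k = alpha k ^+ 2 /\ 0 < alpha k <= 1.
Proof.
elim: k => [//|[|k] IH _].
  by rewrite /= a1 expr1n ltr01 lexx.
have [IHg /andP[b0 b1]] := IH isT.
have [a0 e0] := hr k.+2 isT.
have e : alpha k.+2 ^+ 2 = (1 - alpha k.+2) * gam alpha k.+1 := e0.
have -> : gam alpha k.+2 = (1 - alpha k.+2) * gam alpha k.+1 by [].
rewrite -e; split => //.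
rewrite IHg in e.
apply/andP; split => //.
nra.
Qed.

Lemma tB k : (1 <= k)%N ->
  (k%:R + 1) / 2 <= (alpha k)^-1 <= k%:R.
Proof.
elim: k => [//|[|k] IH _].
  by rewrite a1 invr1; apply/andP; split; lra.
have /andP[IH1 IH2] := IH isT.
have [_ /andP[b0 b1]] := gamB k.+1 isT.
have [ga /andP[a0 a1']] := gamB k.+2 isT.
have [_ e0] := hr k.+2 isT.
have e : alpha k.+2 ^+ 2 = (1 - alpha k.+2) * gam alpha k.+1 := e0.
rewrite (proj1 (gamB k.+1 isT)) in e.
set a := alpha k.+2 in a0 a1' e *.
set b := alpha k.+1 in b0 b1 e IH1 IH2 *.
set t := a^-1; set u := b^-1.
have at1 : a * t = 1 by rewrite /t mulfV // gt_eqF.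
have bu1 : b * u = 1 by rewrite /u mulfV // gt_eqF.
have t1 : 1 <= t by rewrite /t invf_ge1.
have u0 : 0 < u by rewrite /u invr_gt0.
have e2 : u ^+ 2 * (a * t) ^+ 2 = (1 - a) * t ^+ 2 * (b * u) ^+ 2.
  by rewrite !exprMn e; ring.
rewrite at1 bu1 !expr1n !mulr1 in e2.
have e3 : t ^+ 2 - t = u ^+ 2.
  by rewrite e2 mulrBl mul1r; congr (_ - _); rewrite expr2 mulrA at1 mul1r.
have h1 : u + 1/2 <= t.
  rewrite leNgt; apply/negP => h.
  have : 0 < (u + 1/2 - t) * (t - 1/2 + u) by apply: mulr_gt0; lra.
  nra.
have h2 : t <= u + 1.
  rewrite leNgt; apply/negP => h.
  have : 0 < (t - 1 - u) * (t - 1 + u) by apply: mulr_gt0; lra.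
  nra.
have ek1 : (k.+1%:R : R) = k%:R + 1 by rewrite mulrS addrC.
have ek2 : (k.+2%:R : R) = k%:R + 2 by rewrite !mulrS; lra.
rewrite -/u ek1 in IH1 IH2; rewrite ek2.
apply/andP; split; lra.
Qed.

Lemma entryB (rho : R) : 0 <= rho -> rho <= 1 ->
  forall i, (1 <= i)%N -> 0 <= Gam_entry alpha rho i <= 1 * i%:R `^ (1 - rho).
Proof.
move=> r0 r1 i i1.
have [ga /andP[a0 a1']] := gamB i i1.
have /andP[_ ti] := tB i i1.
rewrite /Gam_entry ga mul1r.
set a := alpha i in a0 a1' ti *.
set t := a^-1 in ti *.
have t0 : 0 < t by rewrite /t invr_gt0.
have at1 : a * t = 1 by rewrite /t mulfV // gt_eqF.
have hp : a `^ rho * t `^ rho = 1.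
  by rewrite -powRM ?at1 ?powR1 //; apply: ltW.
have Tnz : t `^ rho != 0 by rewrite gt_eqF // powR_gt0.
have eP : a `^ rho = (t `^ rho)^-1.
  by apply: (mulIf Tnz); rewrite hp mulVf.
rewrite powRD; last by apply/implyP=> _; rewrite gt_eqF.
rewrite powRr1; last exact: ltW.
have -> : (a ^+ 2)^-1 * (a * a `^ rho) = t / t `^ rho.
  by rewrite eP /t; field; rewrite Tnz gt_eqF.
rewrite -[t in t / _]powRr1; last exact: ltW.
rewrite -powRB; last by apply/implyP=> _; rewrite gt_eqF.
apply/andP; split; first exact: powR_ge0.
apply: ge0_ler_powR; rewrite ?nnegrE; [lra | exact: ltW | by [] | done].
Qed.

Lemma finalB (k : nat) (B P Q : R) : (1 <= k)%N -> 0 < B -> 0 <= P ->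
  Q * B <= P * (k%:R + 1) ->
  4 / (k%:R + 1) ^+ 2 * Q <= 4 / B * (P / k%:R).
Proof.
move=> k1 B0 P0 h.
have K1 : 1 <= k%:R :> R by rewrite ler1n.
set K : R := k%:R in K1 h *.
have c0 : 0 <= 4 / ((K + 1) ^+ 2 * B) by rewrite divr_ge0 // mulr_ge0 //; nra.
have -> : 4 / (K + 1) ^+ 2 * Q = 4 / ((K + 1) ^+ 2 * B) * (Q * B).
  by field; rewrite !gt_eqF //; lra.
apply: (le_trans (ler_wpM2l c0 h)).
have c1 : 0 <= 4 * P / (B * K * (K + 1)) by rewrite divr_ge0 // ?mulr_ge0 //; nra.
have -> : 4 / ((K + 1) ^+ 2 * B) * (P * (K + 1)) = 4 * P / (B * K * (K + 1)) * K.
  by field; rewrite !gt_eqF //; lra.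
have -> : 4 / B * (P / K) = 4 * P / (B * K * (K + 1)) * (K + 1).
  by field; rewrite !gt_eqF //; lra.
apply: ler_wpM2l => //; lra.
Qed.

Lemma partB (rho : R) : 0 <= rho -> rho <= 1 ->
  forall k : nat, (1 <= k)%N ->
        gam alpha k * Gam_norm alpha rho k <=
        (4 / 3 `^ ((1 - rho) / 2)) * k%:R `^ (- ((1 + 3 * rho) / 2)).
Proof.
move=> r0 r1 k k1.
have hn := @normb rho 1 k (Gam_entry alpha rho) r0 r1 ler01
  (fun i hi => @entryB rho r0 r1 i (proj1 (andP hi))).
have K1 : 1 <= k%:R :> R by rewrite ler1n.
have [ga /andP[a0 a1']] := gamB k k1.
have /andP[tk _] := tB k k1.
rewrite /Gam_norm mul1r in hn.
set s := (1 - rho) / 2 in hn *.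
have s0 : 0 <= s by rewrite /s; lra.
have s12 : s <= 1/2 by rewrite /s; lra.
have key := @keyK s k k1 s0 s12.
have Q0 : 0 <= (k%:R * (k%:R + 1) * (2 * k%:R + 1) / 6) `^ s := powR_ge0 _ _.
rewrite ga.
apply: (le_trans (ler_wpM2l _ hn)); first by rewrite exprn_ge0 // ltW.
apply: (@le_trans _ _ (4 / (k%:R + 1) ^+ 2 * (k%:R * (k%:R + 1) * (2 * k%:R + 1) / 6) `^ s)).
  apply: ler_wpM2r => //.
  set t := (alpha k)^-1 in tk.
  have at1 : alpha k * t = 1 by rewrite /t mulfV // gt_eqF.
  have ha : alpha k * (k%:R + 1) <= 2 by nra.
  have ha2 : alpha k <= 2 / (k%:R + 1) by rewrite ler_pdivlMr; lra.
  apply: (@le_trans _ _ ((2 / (k%:R + 1)) ^+ 2)).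
    by rewrite lerXn2r // ?nnegrE; [apply: ltW | rewrite divr_ge0 //; lra].
  by rewrite expr_div_n; lra.
have -> : - ((1 + 3 * rho) / 2) = (3 * s - 1) - 1 by rewrite /s; field.
rewrite powRB; last by apply/implyP=> _; rewrite gt_eqF //; lra.
rewrite powRr1; last lra.
apply: finalB => //.
Qed.
End B.
End S.

Theorem proposition3p4 (R : realType) (rho : R) (hrho0 : 0 <= rho) (hrho1 : rho <= 1) :
  (* (a) *)
  (forall alpha : nat -> R,
     (forall k : nat, (1 <= k)%N -> alpha k = 2 / (k%:R + 1)) ->
     (forall k : nat, (1 <= k)%N -> 0 < alpha k <= 1) /\
     alpha 1%N = 1 /\
     (forall k : nat, (1 <= k)%N ->
        gam alpha k * Gam_norm alpha rho k <=
        (2 `^ (1 + rho) * 3 `^ (- ((1 - rho) / 2))) * k%:R `^ (- ((1 + 3 * rho) / 2))))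
  /\
  (* (b) *)
  (forall alpha : nat -> R,
     alpha 1%N = 1 ->
     (forall k : nat, (2 <= k)%N ->
        0 < alpha k /\ alpha k ^+ 2 = (1 - alpha k) * gam alpha k.-1) ->
     (forall k : nat, (1 <= k)%N -> 0 < alpha k <= 1) /\
     alpha 1%N = 1 /\
     (forall k : nat, (1 <= k)%N ->
        gam alpha k * Gam_norm alpha rho k <=
        (4 / 3 `^ ((1 - rho) / 2)) * k%:R `^ (- ((1 + 3 * rho) / 2)))).
Proof.
split.
  move=> alpha ha; split; last split.
  - move=> k k1; rewrite ha //.
    have K0 : 0 <= k%:R :> R by rewrite ler0n.
    have K1 : 1 <= k%:R :> R by rewrite ler1n.
    apply/andP; split; first by rewrite divr_gt0 //; lra.
    by rewrite ler_pdivrMr; lra.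
  - by rewrite ha //; field.
  - exact: partA.
move=> alpha a1 hr; split; last split => //.
  by move=> k k1; exact: (proj2 (@gamB _ alpha a1 hr k k1)).
exact: partB.
Qed.
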